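(* Let $\Sigma_1,\Sigma_2$ be amply equivalent complete fans, $G_i=\mathrm{Hom}_{\mathbf Z}(\mathrm{Cl}(X_{\Sigma_i}),\mathbf C^\times)$, and $\varphi:\Gamma(G_1)_{\mathbf Q}\to\Gamma(G_2)_{\mathbf Q}$ the isomorphism induced by $\Psi$. Then the dual map $\varphi^*:\mathrm{Cl}(X_{\Sigma_2})_{\mathbf Q}\to\mathrm{Cl}(X_{\Sigma_1})_{\mathbf Q}$ is an isomorphism that restricts to an isomorphism $\mathrm{Pic}(X_{\Sigma_2})_{\mathbf Q}\cong\mathrm{Pic}(X_{\Sigma_1})_{\mathbf Q}$, and $\varphi^*(\mathrm{Amp}(X_{\Sigma_2})_{\mathbf Q})=\mathrm{Amp}(X_{\Sigma_1})_{\mathbf Q}$.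
   Context: For a fan $\Sigma$: rays $\Sigma(1)$, primitive generators $u_\rho$, torus-invariant divisors $D_\rho$. A primitive collection is $C\subset\Sigma(1)$ not contained in $\sigma(1)$ for any cone $\sigma$ while every proper subset is. Complete fans $\Sigma_1\subset(N_1)_{\mathbf R}$, $\Sigma_2\subset(N_2)_{\mathbf R}$ with $\mathrm{rank}N_1=\mathrm{rank}N_2$ are amply equivalent via a bijection $\Psi:\Sigma_1(1)\to\Sigma_2(1)$ if $\Psi$ maps primitive collections exactly onto primitive collections and, for all integers $(a_\rho)$, $\sum a_\rho u_\rho=0\iff\sum a_\rho u_{\Psi(\rho)}=0$. $\Gamma(G_i)=\{b\in\mathbf Z^{\Sigma_i(1)}:\sum b_\rho u_\rho=0\}$; $\varphi$ sends $(b_\rho)_{\rho\in\Sigma_1(1)}$ to $(b_{\Psi^{-1}(\rho')})_{\rho'\in\Sigma_2(1)}$. Under the perfect pairings $\mathrm{Cl}(X_{\Sigma_i})_{\mathbf Q}\times\Gamma(G_i)_{\mathbf Q}\to\mathbf Q$, $\langle\sum a_\rho D_\rho,b\rangle=\sum a_\rho b_\rho$, the dual $\varphi^*$ sends the class of $\sum_\rho q_\rho D_{\Psi(\rho)}$ to the class of $\sum_\rho q_\rho D_\rho$. $\mathrm{Amp}(X)_{\mathbf Q}$ is the rational cone over ample Cartier divisors in $\mathrm{Pic}(X)_{\mathbf Q}$. *)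

(* Defs.v *)
(* The lattice N is Z^n (row vectors 'rV[int]_n); N_R = 'rV[R]_n with R the
   Stdlib reals (a realType via Rstruct); M_Q = 'rV[rat]_n.
   The rays Sigma(1) are the elements of a finType I; a fan is encoded by the
   primitive generators u : I -> 'rV[int]_n together with the set C of the
   ray-sets sigma(1) of its cones. *)
From HB Require Import structures.
From mathcomp Require Import Rstruct.
From mathcomp Require Import all_boot all_order all_algebra.
Set Implicit Arguments.
Unset Strict Implicit.
Unset Printing Implicit Defensive.
Import Order.TTheory GRing.Theory Num.Theory.
Local Open Scope ring_scope.

Notation RR := Rdefinitions.R.

Section Toric.
Variables (n : nat) (I : finType) (u : I -> 'rV[int]_n).

Definition dotR (m x : 'rV[RR]_n) : RR := \sum_(i < n) m 0 i * x 0 i.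

Definition uR (r : I) : 'rV[RR]_n := map_mx (fun z : int => z%:~R) (u r).

Definition in_cone (S : {set I}) (x : 'rV[RR]_n) : Prop :=
  exists l : I -> RR, (forall r, 0 <= l r) /\ x = \sum_(r in S) l r *: uR r.

Definition is_face (K F : 'rV[RR]_n -> Prop) : Prop :=
  exists m : 'rV[RR]_n, (forall x, K x -> 0 <= dotR m x) /\
    (forall x, F x <-> (K x /\ dotR m x = 0)).

Definition primitive_vec (v : 'rV[int]_n) : Prop :=
  v != 0 /\ forall d : int, (forall i, v ord0 i \in dvdz d) -> d = 1 \/ d = -1.

Definition is_fan (C : {set {set I}}) : Prop :=
  [/\ (forall r, primitive_vec (u r)) /\ (forall r, [set r] \in C),
      forall S, S \in C -> forall x, in_cone S x -> in_cone S (- x) -> x = 0,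
      forall S, S \in C -> forall r, in_cone S (uR r) -> r \in S,
      forall S, S \in C -> forall F, is_face (in_cone S) F ->
        (exists2 T, T \in C & forall x, in_cone T x <-> F x)
    & forall S T, S \in C -> T \in C ->
        is_face (in_cone S) (fun x => in_cone S x /\ in_cone T x)].

Definition complete_fan (C : {set {set I}}) : Prop :=
  is_fan C /\ forall x : 'rV[RR]_n, exists2 S, S \in C & in_cone S x.

Definition full_dim (S : {set I}) : Prop :=
  forall x : 'rV[RR]_n, exists l : I -> RR, x = \sum_(r in S) l r *: uR r.

(* Divisors with rational coefficients: a : I -> rat is sum_rho a_rho D_rho. *)
Definition dotQ (m : 'rV[rat]_n) (v : 'rV[int]_n) : rat :=
  \sum_(i < n) m 0 i * (v 0 i)%:~R.

(* a and b have the same class in Cl(X)_Q = Q^{Sigma(1)} / M_Q,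
   where div(chi^m) = sum_rho <m,u_rho> D_rho *)
Definition lin_equiv (a b : I -> rat) : Prop :=
  exists m : 'rV[rat]_n, forall r, a r - b r = dotQ m (u r).

Definition QCartier (C : {set {set I}}) (a : I -> rat) : Prop :=
  forall S, S \in C -> exists m : 'rV[rat]_n, forall r, r \in S -> dotQ m (u r) = - a r.

Definition in_Pic (C : {set {set I}}) (a : I -> rat) : Prop :=
  exists b, lin_equiv a b /\ QCartier C b.

(* strict convexity of the support function (toric ampleness criterion for
   complete fans, Cox-Little-Schenck Thm 6.1.14) *)
Definition ample_data (C : {set {set I}}) (a : I -> rat) : Prop :=
  forall S, S \in C -> full_dim S ->
    exists m : 'rV[rat]_n, (forall r, r \in S -> dotQ m (u r) = - a r) /\
                          (forall r, r \notin S -> - a r < dotQ m (u r)).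

Definition in_Amp (C : {set {set I}}) (a : I -> rat) : Prop :=
  exists b, [/\ lin_equiv a b, QCartier C b & ample_data C b].

End Toric.

Definition primitive_collection (I : finType) (C : {set {set I}}) (P : {set I}) : Prop :=
  (forall S, S \in C -> ~~ (P \subset S)) /\
  (forall Q : {set I}, Q \proper P -> exists2 S, S \in C & Q \subset S).

Definition amply_equivalent (n : nat) (I1 I2 : finType)
    (u1 : I1 -> 'rV[int]_n) (C1 : {set {set I1}})
    (u2 : I2 -> 'rV[int]_n) (C2 : {set {set I2}}) (Psi : I1 -> I2) : Prop :=
  [/\ bijective Psi,
      forall P : {set I1}, primitive_collection C1 P <-> primitive_collection C2 (Psi @: P)
    & forall a : I1 -> int,
        \sum_(r : I1) a r *: u1 r = 0 <-> \sum_(r : I1) a r *: u2 (Psi r) = 0].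

(* Main.v *)
Require Import Defs.
From HB Require Import structures.
From mathcomp Require Import Rstruct.
From mathcomp Require Import all_boot all_order all_algebra.
Set Implicit Arguments.
Unset Strict Implicit.
Unset Printing Implicit Defensive.
Import Order.TTheory GRing.Theory Num.Theory.
Local Open Scope ring_scope.
From mathcomp Require Import ring.

Definition dotV n (m x : 'rV[rat]_n) : rat := \sum_i m 0 i * x 0 i.

Lemma dotV_sum n (I : finType) (P : pred I) (m : 'rV[rat]_n) (c : I -> rat) (x : I -> 'rV_n) :
  dotV m (\sum_(r | P r) c r *: x r) = \sum_(r | P r) c r * dotV m (x r).
Proof.
rewrite /dotV. under eq_bigr => i _ do rewrite summxE big_distrr.
rewrite exchange_big /=. apply: eq_bigr => r _. rewrite big_distrr /=.
apply: eq_bigr => i _. by rewrite mxE mulrCA.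
Qed.

Lemma sum_delta n (I : finType) (s : I) (w : I -> 'rV[rat]_n) :
  \sum_r (r == s)%:R *: w r = w s.
Proof.
rewrite (bigD1 s) //= eqxx scale1r big1 ?addr0 // => r /negbTE ->; by rewrite scale0r.
Qed.

Lemma transfer (n : nat) (I : finType) (w1 w2 : I -> 'rV[rat]_n)
  (coef : 'rV[rat]_n -> I -> rat)
  (sp : forall x, x = \sum_r coef x r *: w1 r)
  (rel : forall c, \sum_r c r *: w1 r = 0 -> \sum_r c r *: w2 r = 0) :
  forall m2, exists m1, forall r, dotV m1 (w1 r) = dotV m2 (w2 r).
Proof.
have rel' : forall c s, \sum_r c r *: w1 r = w1 s -> \sum_r c r *: w2 r = w2 s.
  move=> c s H.
  have E : forall w : I -> 'rV[rat]_n, \sum_r (c r - (r==s)%:R) *: w r = \sum_r c r *: w r - w s.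
    move=> w; rewrite -(sum_delta s w) -sumrB; apply: eq_bigr => r _; by rewrite scalerBl.
  move: (rel (fun r => c r - (r==s)%:R)); rewrite !E H subrr => /(_ erefl) /eqP.
  by rewrite subr_eq0 => /eqP.
move=> m2.
exists (\row_i \sum_r coef 'e_i r * dotV m2 (w2 r)) => s.
set mu := fun r => \sum_i w1 s 0 i * coef 'e_i r.
have Hmu : \sum_r mu r *: w1 r = w1 s.
  transitivity (\sum_i w1 s 0 i *: ('e_i : 'rV[rat]_n)); last by rewrite -row_sum_delta.
  rewrite /mu. under eq_bigr => r _ do rewrite scaler_suml.
  rewrite exchange_big /=. apply: eq_bigr => i _.
  rewrite [X in _ = _ *: X](sp 'e_i) scaler_sumr. apply: eq_bigr => r _. by rewrite scalerA.
rewrite -(rel' _ _ Hmu) dotV_sum /mu /dotV.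
under eq_bigr => i _ do rewrite mxE big_distrl.
rewrite exchange_big /=. apply: eq_bigr => r _. rewrite big_distrl /=.
apply: eq_bigr => i _. by rewrite /dotV mulrC mulrA.
Qed.

Section Mx.
Variables (n : nat) (I : finType) (u : I -> 'rV[int]_n).
Definition vF (F : fieldType) (r : I) : 'rV[F]_n := map_mx (fun z : int => z%:~R) (u r).
Definition MxF (F : fieldType) (S : {set I}) : 'M[F]_(#|I|, n) :=
  \matrix_(k, j) (if enum_val k \in S then ((u (enum_val k)) 0 j)%:~R else 0).

Lemma sum_enum (V : nmodType) (f : 'I_#|I| -> V) : \sum_k f k = \sum_r f (enum_rank r).
Proof. apply: (reindex enum_rank). exists enum_val => x _; [exact: enum_rankK | exact: enum_valK]. Qed.

Lemma mulMx (F : fieldType) S (w : 'rV[F]_#|I|) :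
  w *m MxF F S = \sum_(r in S) w 0 (enum_rank r) *: vF F r.
Proof.
rewrite mulmx_sum_row sum_enum [RHS]big_mkcond /=; apply: eq_bigr => r _.
have -> : row (enum_rank r) (MxF F S) = if r \in S then vF F r else 0.
  apply/rowP => j; rewrite !mxE enum_rankK; case: ifP => _; by rewrite ?mxE.
case: ifP => _ //; by rewrite scaler0.
Qed.

Lemma span_full (F : fieldType) (S : {set I}) : (forall x : 'rV[F]_n, exists l : I -> F, x = \sum_(r in S) l r *: vF F r) ->
  row_full (MxF F S).
Proof.
move=> H. rewrite -sub1mx. apply/row_subP => i. apply/submxP.
have [l Hl] := H (row i 1%:M). exists (\row_k l (enum_val k)).
rewrite mulMx Hl; apply: eq_bigr => r _; by rewrite mxE enum_rankK.
Qed.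

Lemma full_span (F : fieldType) (S : {set I}) : row_full (MxF F S) -> forall x,
  x = \sum_(r in S) ((x *m pinvmx (MxF F S)) 0 (enum_rank r)) *: vF F r.
Proof. move=> H x. by rewrite -mulMx mulmxKpV // submx_full. Qed.

Lemma MxQR (S : {set I}) : map_mx (@ratr RR) (MxF rat S) = MxF RR S.
Proof. apply/matrixP => k j; rewrite !mxE; case: ifP => _; [exact: rmorph_int | exact: rmorph0]. Qed.

Lemma func_full (S : {set I}) : (forall m : 'rV[rat]_n, (forall r, r \in S -> dotV m (vF rat r) = 0) -> m = 0) ->
  row_full (MxF rat S).
Proof.
move=> H. apply: contraT => nf.
set A := MxF rat S. set B := (cokermx A)^T.
have rk : \rank B != 0%N.
  rewrite mxrank_tr mxrank_coker subn_eq0 -ltnNge ltn_neqAle rank_leq_col andbT.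
  exact: nf.
have Bn0 : B != 0 by apply: contra rk => /eqP ->; rewrite mxrank0.
have [i Hi] : exists i, row i B != 0.
  apply/existsP; apply: contraR Bn0 => /existsPn Hr; apply/eqP/row_matrixP => i.
  rewrite row0; exact/eqP/negPn/Hr.
suff : row i B = 0 by move/eqP; rewrite (negbTE Hi).
apply: H => r rS.
have : (A *m cokermx A) (enum_rank r) i = 0 by rewrite mulmx_coker mxE.
rewrite mxE /dotV => E; rewrite -[X in _ = X]E. apply: eq_bigr => j _. by rewrite !mxE enum_rankK rS mulrC.
Qed.

Lemma dotV_delta (m : 'rV[rat]_n) j : dotV m 'e_j = m 0 j.
Proof.
rewrite /dotV (bigD1 j) //= mxE !eqxx mulr1 big1 ?addr0 // => k /negbTE kj.
by rewrite mxE kj andbF mulr0.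
Qed.

Lemma span_func (S : {set I}) : (forall x, exists l : I -> rat, x = \sum_(r in S) l r *: vF rat r) ->
  forall m, (forall r, r \in S -> dotV m (vF rat r) = 0) -> m = 0.
Proof.
move=> H m Hm. apply/rowP => j. have [l Hl] := H 'e_j.
rewrite mxE -dotV_delta Hl dotV_sum big1 // => r rS; by rewrite Hm // mulr0.
Qed.

Lemma dotQV m r : dotQ m (u r) = dotV m (vF rat r).
Proof. rewrite /dotQ /dotV; apply: eq_bigr => i _; by rewrite mxE. Qed.

Definition funcQ (S : {set I}) := forall m : 'rV[rat]_n, (forall r, r \in S -> dotV m (vF rat r) = 0) -> m = 0.

Lemma full_dim_func (S : {set I}) : full_dim u S <-> funcQ S.
Proof.
split.
- move=> H. apply: span_func => x.
  have : row_full (MxF RR S) by apply: span_full.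
  rewrite -MxQR row_full_map => /full_span Hs. by exists (fun r => (x *m pinvmx (MxF rat S)) 0 (enum_rank r)).
- move=> /func_full. rewrite -(row_full_map (@ratr RR)) MxQR => /full_span Hs x.
  by exists (fun r => (x *m pinvmx (MxF RR S)) 0 (enum_rank r)).
Qed.
End Mx.

Lemma mapsum n (I : finType) (w : I -> 'rV[int]_n) (a : I -> int) :
  \sum_r (a r)%:~R *: vF w rat r = map_mx (fun z : int => z%:~R) (\sum_r a r *: w r).
Proof.
apply/rowP => j; rewrite !mxE !summxE rmorph_sum; apply: eq_bigr => r _.
rewrite !mxE rmorphM. done.
Qed.

Lemma mapsum0 n (I : finType) (w : I -> 'rV[int]_n) (a : I -> int) :
  (\sum_r (a r)%:~R *: vF w rat r = 0) <-> (\sum_r a r *: w r = 0).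
Proof.
rewrite mapsum; split => H.
- apply/rowP => j. move/rowP: H => /(_ j). rewrite !mxE => /eqP. by rewrite intr_eq0 => /eqP.
- by rewrite H; apply/rowP => j; rewrite !mxE.
Qed.

Lemma relQ n (I : finType) (w1 w2 : I -> 'rV[int]_n)
  (H : forall a : I -> int, \sum_r a r *: w1 r = 0 -> \sum_r a r *: w2 r = 0) :
  forall c : I -> rat, \sum_r c r *: vF w1 rat r = 0 -> \sum_r c r *: vF w2 rat r = 0.
Proof.
move=> c Hc.
pose d : int := \prod_r denq (c r).
pose a r : int := numq (c r) * \prod_(s | s != r) denq (c s).
have Ha : forall r, (a r)%:~R = d%:~R * c r :> rat.
  move=> r; rewrite /a /d [X in _ = X%:~R * _](bigD1 r) //= !intrM numqE; ring.
have dn0 : (d%:~R : rat) != 0.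
  rewrite intr_eq0; apply/prodf_neq0 => r _; exact: denq_neq0.
have E : forall w : I -> 'rV[int]_n,
    \sum_r (a r)%:~R *: vF w rat r = d%:~R *: \sum_r c r *: vF w rat r.
  move=> w; rewrite scaler_sumr; apply: eq_bigr => r _; by rewrite scalerA Ha.
have : \sum_r a r *: w2 r = 0.
  apply: H; apply/mapsum0; by rewrite E Hc scaler0.
move/mapsum0; rewrite E => /eqP; rewrite scaler_eq0 (negbTE dn0) /= => /eqP //.
Qed.

Lemma dotR_sum n (I : finType) (P : pred I) (m : 'rV[RR]_n) (c : I -> RR) (x : I -> 'rV_n) :
  dotR m (\sum_(r | P r) c r *: x r) = \sum_(r | P r) c r * dotR m (x r).
Proof.
rewrite /dotR. under eq_bigr => i _ do rewrite summxE big_distrr.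
rewrite exchange_big /=. apply: eq_bigr => r _. rewrite big_distrr /=.
apply: eq_bigr => i _. by rewrite mxE mulrCA.
Qed.

Definition Db (I : finType) (C : {set {set I}}) (P : {set I}) : bool :=
  [exists S, (S \in C) && (P \subset S)].

Lemma prim_none (I : finType) (C : {set {set I}}) (P : {set I}) :
  ~~ Db C P -> ~~ [exists Q : {set I}, (Q \proper P) && ~~ Db C Q] ->
  primitive_collection C P.
Proof.
move=> nD none; split.
- move=> S SC; move/existsPn: nD => /(_ S); by rewrite SC.
- move=> Q QP; move/existsPn: none => /(_ Q); rewrite QP /= negbK => /existsP [S /andP [SC QS]].
  by exists S.
Qed.

Lemma minimal_prim (I : finType) (C : {set {set I}}) k : forall P : {set I},
  (#|P| <= k)%N -> ~~ Db C P -> exists2 Q : {set I}, Q \subset P & primitive_collection C Q.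
Proof.
elim: k => [|k IH] P HP nD;
  (case: (boolP [exists Q : {set I}, (Q \proper P) && ~~ Db C Q]) =>
     [/existsP [Q /andP [QP nDQ]] | none]; last by exists P => //; exact: prim_none).
- have := proper_card QP; by rewrite ltnNge (leq_trans HP (leq0n _)).
- have [|Q' Q'Q pQ'] := IH Q _ nDQ.
    by rewrite -ltnS (leq_trans (proper_card QP)).
  exists Q' => //; apply: subset_trans Q'Q (proper_sub QP).
Qed.

Lemma Db_prim (I : finType) (C : {set {set I}}) (P : {set I}) :
  Db C P <-> (forall Q : {set I}, Q \subset P -> ~ primitive_collection C Q).
Proof.
split.
- move=> /existsP [S /andP [SC PS]] Q QP [H _]. by move: (H S SC); rewrite (subset_trans QP PS).
- move=> H; apply: contraT => nD.
  have [Q QP pQ] := minimal_prim (leqnn #|P|) nD. by case: (H Q QP pQ).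
Qed.

Section Fan.
Variables (n : nat) (I : finType) (u : I -> 'rV[int]_n) (C : {set {set I}}).

Lemma in_cone_self (S : {set I}) r : r \in S -> in_cone u S (uR u r).
Proof.
move=> rS; exists (fun s => (s == r)%:R); split; first by move=> s; exact: ler0n.
rewrite (bigD1 r) //= eqxx scale1r big1 ?addr0 // => s /andP [_ /negbTE ->]; by rewrite scale0r.
Qed.

Lemma in_cone_sub (S T : {set I}) x : S \subset T -> in_cone u S x -> in_cone u T x.
Proof.
move=> ST [l [l0 ->]]; exists (fun s => if s \in S then l s else 0); split.
  by move=> s; case: ifP.
rewrite [LHS]big_mkcond [RHS]big_mkcond; apply: eq_bigr => s _.
case: ifP => sS; first by rewrite (subsetP ST _ sS).
case: ifP => _; by rewrite ?scale0r.
Qed.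

Lemma full_max (S T : {set I}) : is_fan u C -> S \in C -> full_dim u S -> T \in C ->
  S \subset T -> T = S.
Proof.
move=> [_ _ Hray _ Hface] SC fS TC ST.
have [m [m0 Hm]] := Hface T S TC SC.
apply/eqP; rewrite eqEsubset; apply/andP; split => //.
apply/subsetP => r rT.
have H0 : forall s, s \in S -> dotR m (uR u s) = 0.
  move=> s sS; have [] := (Hm (uR u s)).1; last by [].
  split; [exact: (in_cone_sub ST (in_cone_self sS)) | exact: in_cone_self].
have [l Hl] := fS (uR u r).
have Fr : in_cone u T (uR u r) /\ in_cone u S (uR u r).
  apply/Hm; split; first exact: in_cone_self.
  by rewrite Hl dotR_sum big1 // => s sS; rewrite H0 // mulr0.
exact: Hray _ SC _ Fr.2.
Qed.

Lemma complete_full : complete_fan u C -> full_dim u [set: I].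
Proof.
move=> [_ Hc] x. have [S _ Hx] := Hc x.
have [l [_ ->]] := in_cone_sub (subsetT S) Hx. by exists l.
Qed.

Lemma complete_span : complete_fan u C ->
  exists coef : 'rV[rat]_n -> I -> rat, forall x, x = \sum_r coef x r *: vF u rat r.
Proof.
move=> /complete_full /full_dim_func /func_full /full_span Hs.
exists (fun x r => (x *m pinvmx (MxF u rat [set: I])) 0 (enum_rank r)) => x.
rewrite [LHS]Hs; apply: eq_bigl => r; by rewrite in_setT.
Qed.

Lemma complete_func : complete_fan u C -> funcQ u [set: I].
Proof. by move=> /complete_full /full_dim_func. Qed.
End Fan.

Section Main.
Variables (n : nat) (I1 I2 : finType) (u1 : I1 -> 'rV[int]_n) (C1 : {set {set I1}})
  (u2 : I2 -> 'rV[int]_n) (C2 : {set {set I2}}) (Psi : I1 -> I2) (Phi : I2 -> I1).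
Hypotheses (H1 : complete_fan u1 C1) (H2 : complete_fan u2 C2)
  (K1 : cancel Psi Phi) (K2 : cancel Phi Psi)
  (HP : forall P : {set I1}, primitive_collection C1 P <-> primitive_collection C2 (Psi @: P))
  (HR : forall a : I1 -> int,
        \sum_(r : I1) a r *: u1 r = 0 <-> \sum_(r : I1) a r *: u2 (Psi r) = 0).

Lemma PsiPhi (Q : {set I2}) : Psi @: (Phi @: Q) = Q.
Proof.
apply/setP => x; apply/imsetP/idP => [[y /imsetP [z zQ ->] ->] | xQ].
  by rewrite K2.
by exists (Phi x); [apply/imsetP; exists x | rewrite K2].
Qed.

Lemma PhiPsi (Q : {set I1}) : Phi @: (Psi @: Q) = Q.
Proof.
apply/setP => x; apply/imsetP/idP => [[y /imsetP [z zQ ->] ->] | xQ].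
  by rewrite K1.
by exists (Psi x); [apply/imsetP; exists x | rewrite K1].
Qed.

Lemma inj1 : injective Psi. Proof. exact: can_inj K1. Qed.
Lemma inj2 : injective Phi. Proof. exact: can_inj K2. Qed.

Lemma Db_tr (P : {set I1}) : Db C1 P <-> Db C2 (Psi @: P).
Proof.
rewrite !Db_prim; split => H Q QP pQ.
- apply: (H (Phi @: Q)).
    apply/subsetP => x /imsetP [y yQ ->].
    move: (subsetP QP y yQ) => /imsetP [z zP ->]; by rewrite K1.
  by apply/HP; rewrite PsiPhi.
- apply: (H (Psi @: Q)); [exact: imsetS | exact/HP].
Qed.

Lemma T21 (m2 : 'rV[rat]_n) : exists m1 : 'rV[rat]_n,
  forall r, dotQ m1 (u1 r) = dotQ m2 (u2 (Psi r)).
Proof.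
have [coef Hc] := complete_span H1.
have [m1 Hm] := transfer (w1 := vF u1 rat) (w2 := vF (u2 \o Psi) rat) Hc
  (relQ (fun a => (HR a).1)) m2.
exists m1 => r; rewrite !dotQV; exact: Hm.
Qed.

Lemma T12 (m1 : 'rV[rat]_n) : exists m2 : 'rV[rat]_n,
  forall r, dotQ m2 (u2 (Psi r)) = dotQ m1 (u1 r).
Proof.
have [coef Hc] := complete_span H2.
have Hc' : forall x, x = \sum_r (coef x \o Psi) r *: vF (u2 \o Psi) rat r.
  move=> x; rewrite [LHS]Hc (reindex Psi) //; exists Phi => y _; [exact: K1 | exact: K2].
have [m2 Hm] := transfer (w1 := vF (u2 \o Psi) rat) (w2 := vF u1 rat) Hc'
  (relQ (w1 := u2 \o Psi) (fun a => (HR a).2)) m1.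
exists m2 => r; rewrite !dotQV; exact: Hm.
Qed.

Lemma dotV0 (x : 'rV[rat]_n) : dotV 0 x = 0.
Proof. rewrite /dotV big1 // => i _; by rewrite mxE mul0r. Qed.

Lemma func_tr (S : {set I1}) : funcQ u1 S <-> funcQ u2 (Psi @: S).
Proof.
split => H m Hm.
- have [m1 Hm1] := T21 m.
  have m10 : m1 = 0.
    apply: H => r rS; rewrite -dotQV Hm1 dotQV; apply: Hm; by rewrite mem_imset //; exact: inj1.
  apply: (complete_func H2) => r' _.
  by rewrite -(K2 r') -dotQV -Hm1 m10 dotQV dotV0.
- have [m2 Hm2] := T12 m.
  have m20 : m2 = 0.
    apply: H => r' /imsetP [r rS ->]; rewrite -dotQV Hm2 dotQV; exact: Hm.
  apply: (complete_func H1) => r _.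
  by rewrite -dotQV -Hm2 m20 dotQV dotV0.
Qed.

Lemma fd_tr (S : {set I1}) : full_dim u1 S <-> full_dim u2 (Psi @: S).
Proof. by rewrite !full_dim_func func_tr. Qed.

Lemma CC1 (S1 : {set I1}) : S1 \in C1 -> full_dim u1 S1 -> Psi @: S1 \in C2.
Proof.
move=> S1C fS1.
have /Db_tr /existsP [T2 /andP [T2C PT2]] : Db C1 S1 by apply/existsP; exists S1; rewrite S1C subxx.
have : Db C2 (Psi @: (Phi @: T2)) by rewrite PsiPhi; apply/existsP; exists T2; rewrite T2C subxx.
move/Db_tr => /existsP [T1 /andP [T1C PT1]].
have S1T : S1 \subset Phi @: T2.
  apply/subsetP => x xS; apply/imsetP; exists (Psi x); last by rewrite K1.
  by apply: (subsetP PT2); rewrite mem_imset //; exact: inj1.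
have E := full_max H1.1 S1C fS1 T1C (subset_trans S1T PT1).
suff -> : Psi @: S1 = T2 by [].
apply/eqP; rewrite eqEsubset PT2 /= -{1}(PsiPhi T2); apply: imsetS; by rewrite -E.
Qed.

Lemma CC2 (S2 : {set I2}) : S2 \in C2 -> full_dim u2 S2 -> Phi @: S2 \in C1.
Proof.
move=> S2C fS2.
have /Db_tr /existsP [T1 /andP [T1C PT1]] : Db C2 (Psi @: (Phi @: S2)).
  by rewrite PsiPhi; apply/existsP; exists S2; rewrite S2C subxx.
have /Db_tr /existsP [T2 /andP [T2C PT2]] : Db C1 T1 by apply/existsP; exists T1; rewrite T1C subxx.
have S2T : S2 \subset T2 by rewrite -(PsiPhi S2); apply: subset_trans PT2; exact: imsetS.
have E := full_max H2.1 S2C fS2 T2C S2T.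
suff -> : Phi @: S2 = T1 by [].
apply/eqP; rewrite eqEsubset PT1 /=.
apply/subsetP => x xT; apply/imsetP; exists (Psi x); last by rewrite K1.
by rewrite -E; apply: (subsetP PT2); rewrite mem_imset //; exact: inj1.
Qed.

Lemma LE (a1 b1 : I1 -> rat) (a2 b2 : I2 -> rat) :
  (forall r, a1 r = a2 (Psi r)) -> (forall r, b1 r = b2 (Psi r)) ->
  lin_equiv u2 a2 b2 <-> lin_equiv u1 a1 b1.
Proof.
move=> Ha Hb; split => [[m2 Hm] | [m1 Hm]].
- have [m1 Hm1] := T21 m2; exists m1 => r; by rewrite Hm1 Ha Hb Hm.
- have [m2 Hm2] := T12 m1; exists m2 => r'.
  have -> : r' = Psi (Phi r') by rewrite K2.
  by rewrite Hm2 -Ha -Hb Hm.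
Qed.

Lemma QC (b1 : I1 -> rat) (b2 : I2 -> rat) :
  (forall r, b1 r = b2 (Psi r)) -> QCartier u2 C2 b2 <-> QCartier u1 C1 b1.
Proof.
move=> Hb; split => H S SC.
- have /Db_tr /existsP [T2 /andP [T2C PT2]] : Db C1 S by apply/existsP; exists S; rewrite SC subxx.
  have [m2 Hm] := H T2 T2C. have [m1 Hm1] := T21 m2.
  exists m1 => r rS; rewrite Hm1 Hb Hm //; apply: (subsetP PT2); rewrite mem_imset //; exact: inj1.
- have /Db_tr /existsP [T1 /andP [T1C PT1]] : Db C2 (Psi @: (Phi @: S)).
    by rewrite PsiPhi; apply/existsP; exists S; rewrite SC subxx.
  have [m1 Hm] := H T1 T1C. have [m2 Hm2] := T12 m1.
  exists m2 => r' r'S.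
  have -> : r' = Psi (Phi r') by rewrite K2.
  rewrite Hm2 -Hb Hm //; apply: (subsetP PT1); rewrite mem_imset //; exact: inj2.
Qed.

Lemma AD (b1 : I1 -> rat) (b2 : I2 -> rat) :
  (forall r, b1 r = b2 (Psi r)) -> ample_data u2 C2 b2 <-> ample_data u1 C1 b1.
Proof.
move=> Hb; split => H S SC fS.
- have [m2 [Hm Hm']] := H _ (CC1 SC fS) ((fd_tr S).1 fS).
  have [m1 Hm1] := T21 m2.
  exists m1; split => r rS; rewrite Hm1 Hb.
    by apply: Hm; rewrite mem_imset //; exact: inj1.
  by apply: Hm'; rewrite mem_imset //; exact: inj1.
- have fS' : full_dim u1 (Phi @: S) by apply/fd_tr; rewrite PsiPhi.
  have [m1 [Hm Hm']] := H _ (CC2 SC fS) fS'.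
  have [m2 Hm2] := T12 m1.
  exists m2; split => r' r'S; rewrite -[r']K2 Hm2 -Hb.
    by apply: Hm; rewrite mem_imset //; exact: inj2.
  by apply: Hm'; rewrite mem_imset //; exact: inj2.
Qed.
End Main.
Theorem proposition5p28 (n : nat) (I1 I2 : finType)
    (u1 : I1 -> 'rV[int]_n) (C1 : {set {set I1}})
    (u2 : I2 -> 'rV[int]_n) (C2 : {set {set I2}}) (Psi : I1 -> I2) :
  complete_fan u1 C1 -> complete_fan u2 C2 ->
  amply_equivalent u1 C1 u2 C2 Psi ->
  [/\ (* phi^* is well defined and injective on Cl(X_2)_Q *)
      forall a b : I2 -> rat, lin_equiv u2 a b <-> lin_equiv u1 (a \o Psi) (b \o Psi),
      (* phi^* is surjective onto Cl(X_1)_Q *)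
      forall a1 : I1 -> rat, exists a2 : I2 -> rat, lin_equiv u1 (a2 \o Psi) a1,
      (* phi^*(Pic(X_2)_Q) = Pic(X_1)_Q *)
      forall a : I2 -> rat, in_Pic u2 C2 a <-> in_Pic u1 C1 (a \o Psi)
    & (* phi^*(Amp(X_2)_Q) = Amp(X_1)_Q *)
      forall a : I2 -> rat, in_Amp u2 C2 a <-> in_Amp u1 C1 (a \o Psi)].
Proof.
move=> H1 H2 [[Phi K1 K2] HP HR].
have LE' := LE H1 H2 K1 K2 HR.
have QC' := QC H1 H2 K1 K2 HP HR.
have AD' := AD H1 H2 K1 K2 HP HR.
split.
- move=> a b; exact: LE'.
- move=> a1; exists (a1 \o Phi); exists 0 => r.
  rewrite /= K1 subrr /dotQ big1 // => i _; by rewrite mxE mul0r.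
- move=> a; split => [[b [Hl Hq]] | [b [Hl Hq]]].
  + exists (b \o Psi); split; [exact/(LE' _ _ a b) | exact/(QC' _ b)].
  + exists (b \o Phi).
    have Hb : forall r, b r = (b \o Phi) (Psi r) by move=> r; rewrite /= K1.
    split; [exact/(LE' (a \o Psi) b) | exact/(QC' b)].
- move=> a; split => [[b [Hl Hq Ha]] | [b [Hl Hq Ha]]].
  + exists (b \o Psi); split; [exact/(LE' _ _ a b) | exact/(QC' _ b) | exact/(AD' _ b)].
  + exists (b \o Phi).
    have Hb : forall r, b r = (b \o Phi) (Psi r) by move=> r; rewrite /= K1.
    split; [exact/(LE' (a \o Psi) b) | exact/(QC' b) | exact/(AD' b)].
Qed.
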